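(* If the semigroup $\mathbb NA$ is scored, then $\mathbb Q(A\cap\tau)\cap\mathbb Z^d=\mathbb Z(A\cap\tau)$ for all faces $\tau$ of the cone $\mathbb R_{\ge0}A$.
   Context: $A\subset\mathbb Z^d$ is a finite set generating the group $\mathbb Z^d$; $\mathbb NA$ its monoid. For a facet $\sigma$ of $\mathbb R_{\ge0}A$, $F_\sigma$ is the unique linear form with $F_\sigma(\mathbb R_{\ge0}A)\ge0$, $F_\sigma(\sigma)=0$, $F_\sigma(\mathbb Z^d)=\mathbb Z$. $\mathbb NA$ is scored if $\mathbb NA=\bigcap_{\sigma\text{ facet}}\{\mathbf a\in\mathbb Z^d:F_\sigma(\mathbf a)\in F_\sigma(\mathbb NA)\}$. *)

(* Defs.v *)
From mathcomp Require Import all_boot all_order all_algebra.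
From mathcomp Require Import reals.
Set Implicit Arguments. Unset Strict Implicit. Unset Printing Implicit Defensive.
Import Order.TTheory GRing.Theory Num.Theory.
Local Open Scope ring_scope.

Section Defs.
Variables (R : realType) (d : nat).
Implicit Types (A : seq 'rV[int]_d) (a x : 'rV[int]_d).

Definition toR (a : 'rV[int]_d) : 'rV[R]_d := map_mx (fun z : int => z%:~R) a.
Definition toQ (a : 'rV[int]_d) : 'rV[rat]_d := map_mx (fun z : int => z%:~R) a.

Definition dotR (l x : 'rV[R]_d) : R := \sum_(i < d) l 0 i * x 0 i.
Definition dotZ (l x : 'rV[int]_d) : int := \sum_(i < d) l 0 i * x 0 i.

Definition generates A : Prop :=
  forall x, exists c : 'I_(size A) -> int, x = \sum_(i < size A) c i *: A`_i.

Definition inNA A x : Prop :=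
  exists n : 'I_(size A) -> nat, x = \sum_(i < size A) A`_i *+ n i.

Definition cone A (y : 'rV[R]_d) : Prop :=
  exists c : 'I_(size A) -> R, (forall i, 0 <= c i) /\
    y = \sum_(i < size A) c i *: toR A`_i.

(* faces of the cone: intersections with supporting hyperplanes
   (l = 0 gives the cone itself) *)
Definition is_face A (tau : 'rV[R]_d -> Prop) : Prop :=
  exists l : 'rV[R]_d, (forall y, cone A y -> 0 <= dotR l y) /\
    (forall y, tau y <-> (cone A y /\ dotR l y = 0)).

Definition dim_ge (tau : 'rV[R]_d -> Prop) (k : nat) : Prop :=
  exists v : 'I_k -> 'rV[R]_d, (forall i, tau (v i)) /\
    row_free (\matrix_(i < k) v i).

Definition is_facet A (sigma : 'rV[R]_d -> Prop) : Prop :=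
  is_face A sigma /\ dim_ge sigma d.-1 /\ ~ dim_ge sigma d.

(* F is the primitive integral inner normal F_sigma of the facet sigma:
   F >= 0 on the cone, F = 0 on sigma, F(Z^d) = Z *)
Definition is_Fsigma A (sigma : 'rV[R]_d -> Prop) (F : 'rV[int]_d) : Prop :=
  (forall y, cone A y -> 0 <= dotR (toR F) y) /\
  (forall y, sigma y -> dotR (toR F) y = 0) /\
  (forall z : int, exists x, dotZ F x = z).

Definition scored A : Prop :=
  forall x,
    (forall (sigma : 'rV[R]_d -> Prop) (F : 'rV[int]_d),
        is_facet A sigma -> is_Fsigma A sigma F ->
        exists b, inNA A b /\ dotZ F x = dotZ F b) ->
    inNA A x.

Definition inQspan A (tau : 'rV[R]_d -> Prop) x : Prop :=
  exists q : 'I_(size A) -> rat, (forall i : 'I_(size A), ~ tau (toR A`_i) -> q i = 0) /\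
    toQ x = \sum_(i < size A) q i *: toQ A`_i.

Definition inZspan A (tau : 'rV[R]_d -> Prop) x : Prop :=
  exists c : 'I_(size A) -> int, (forall i : 'I_(size A), ~ tau (toR A`_i) -> c i = 0) /\
    x = \sum_(i < size A) c i *: A`_i.

End Defs.

(* Main.v *)
Require Import Defs.
From mathcomp Require Import all_boot all_order all_algebra reals boolp.
From mathcomp Require Import zify ring lra.
Import Order.TTheory GRing.Theory Num.Theory.
Set Implicit Arguments. Unset Strict Implicit. Unset Printing Implicit Defensive.
Local Open Scope ring_scope.
Section Dotg.
Variables (T : comNzRingType) (d : nat).
Definition dotg (l x : 'rV[T]_d) : T := \sum_(i < d) l 0 i * x 0 i.
Lemma dotg_sum (l : 'rV[T]_d) I (r : seq I) (P : pred I) (f : I -> 'rV[T]_d) :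
  dotg l (\sum_(k <- r | P k) f k) = \sum_(k <- r | P k) dotg l (f k).
Proof.
rewrite /dotg (exchange_big). apply: eq_bigr => i _.
by rewrite summxE mulr_sumr.
Qed.
Lemma dotgD l x y : dotg l (x + y) = dotg l x + dotg l y.
Proof. by rewrite /dotg -big_split; apply: eq_bigr => i _; rewrite mxE mulrDr. Qed.
Lemma dotg0 l : dotg l 0 = 0.
Proof. by rewrite /dotg big1 // => i _; rewrite mxE mulr0. Qed.
Lemma dotgZ l c x : dotg l (c *: x) = c * dotg l x.
Proof. by rewrite /dotg mulr_sumr; apply: eq_bigr => i _; rewrite mxE mulrCA. Qed.
Lemma dotgMn l x n : dotg l (x *+ n) = dotg l x *+ n.
Proof. elim: n => [|n IH]; first by rewrite !mulr0n dotg0.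
by rewrite !mulrS dotgD IH. Qed.
Lemma dotgN l x : dotg l (- x) = - dotg l x.
Proof. by rewrite /dotg -sumrN; apply: eq_bigr => i _; rewrite mxE mulrN. Qed.
Lemma dotgl_scale c l x : dotg (c *: l) x = c * dotg l x.
Proof. by rewrite /dotg mulr_sumr; apply: eq_bigr => i _; rewrite mxE mulrA. Qed.
End Dotg.
Lemma intMn (x : int) k : x *+ k = x * Posz k.
Proof. by rewrite -mulr_natr natz. Qed.

Lemma frob (S : int -> Prop) : S 0 -> (forall a b, S a -> S b -> S (a+b)) ->
  forall p q, S p -> S q -> p = q + 1 -> 0 <= q -> forall m, q*q <= m -> S m.
Proof.
move=> S0 SD p q Sp Sq epq q0 m hm.
have SM : forall a k, S a -> S (a *+ k).
  move=> a k Sa; elim: k => [|k IH]; first by rewrite mulr0n.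
  by rewrite mulrS; apply: SD.
case: q Sq epq q0 hm => // qn Sq epq _ hm.
have m0 : 0 <= m by apply: le_trans hm; rewrite mulr_ge0.
case: m m0 hm => // mn _ hm.
have hm' : (qn * qn <= mn)%N by move: hm; rewrite -PoszM lez_nat.
case: (posnP qn) => [qn0|qpos].
  subst qn; rewrite epq add0r in Sp.
  have -> : Posz mn = 1 *+ mn by rewrite natz.
  exact: SM.
set s := (mn %/ qn)%N; set r := (mn %% qn)%N.
have hr : (r < qn)%N := ltn_pmod mn qpos.
have hs : (qn <= s)%N by rewrite /s (leq_divRL _ _ qpos).
have hrs : (r <= s)%N by apply: ltnW; apply: leq_trans hr hs.
have -> : Posz mn = Posz qn *+ (s - r) + p *+ r.
  rewrite epq !intMn.
  have hd : mn = (s * qn + r)%N by rewrite /s /r -divn_eq.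
  have -> : Posz (s - r)%N = Posz s - Posz r by rewrite subzn.
  rewrite hd PoszD PoszM; ring.
by apply: SD; apply: SM.
Qed.

Section Main.
Variables (R : realType) (d : nat) (A : seq 'rV[int]_d).
Local Notation n := (size A).
Local Notation a i := (A`_i).

Lemma dotZE (l x : 'rV[int]_d) : dotZ l x = dotg l x. Proof. by []. Qed.
Lemma dotRE (l x : 'rV[R]_d) : dotR l x = dotg l x. Proof. by []. Qed.

Lemma toRD (u v : 'rV[int]_d) : toR R (u + v) = toR R u + toR R v.
Proof. by apply/matrixP=> i j; rewrite !mxE rmorphD. Qed.
Lemma toR0 : toR R (0 : 'rV[int]_d) = 0.
Proof. by apply/matrixP=> i j; rewrite !mxE. Qed.
Lemma toRMn (u : 'rV[int]_d) k : toR R (u *+ k) = toR R u *+ k.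
Proof. elim: k => [|k IH]; first by rewrite !mulr0n toR0.
by rewrite !mulrS toRD IH. Qed.
Lemma toR_sum I (r : seq I) (P : pred I) (f : I -> 'rV[int]_d) :
  toR R (\sum_(k <- r | P k) f k) = \sum_(k <- r | P k) toR R (f k).
Proof. by apply/matrixP=> i j; rewrite !mxE !summxE rmorph_sum; apply: eq_bigr => k _; rewrite mxE. Qed.

Lemma dotR_toR (F u : 'rV[int]_d) : dotR (toR R F) (toR R u) = (dotZ F u)%:~R.
Proof. by rewrite /dotR /dotZ rmorph_sum; apply: eq_bigr => i _; rewrite !mxE rmorphM. Qed.

Lemma cone_a (i : 'I_n) : cone A (toR R (a i)).
Proof.
exists (fun j => (j == i)%:R); split; first by move=> j; rewrite ler0n.
rewrite (bigD1 i) //= big1 => [|j /negbTE ->]; first by rewrite eqxx scale1r addr0.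
by rewrite scale0r.
Qed.

Lemma dot_a (l : 'rV[R]_d) : (forall y, cone A y -> 0 <= dotR l y) ->
  forall i : 'I_n, 0 <= dotR l (toR R (a i)).
Proof. by move=> h i; apply: h; apply: cone_a. Qed.

Lemma dot_cone (l : 'rV[R]_d) (c : 'I_n -> R) :
  dotR l (\sum_(i < n) c i *: toR R (a i)) = \sum_i c i * dotR l (toR R (a i)).
Proof. by rewrite dotRE dotg_sum; apply: eq_bigr => i _; rewrite dotgZ. Qed.

Lemma gen_dot (F y : 'rV[int]_d) : generates A -> exists c : 'I_n -> int,
  dotZ F y = \sum_i c i * dotZ F (a i).
Proof.
move=> /(_ y) [c ->]; exists c.
by rewrite dotZE dotg_sum; apply: eq_bigr => i _; rewrite dotgZ.
Qed.

Lemma Q_to_R (x : 'rV[int]_d) (q : 'I_n -> rat) :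
  toQ x = \sum_(i < n) q i *: toQ (a i) ->
  toR R x = \sum_(i < n) ratr (q i) *: toR R (a i).
Proof.
move=> h; apply/matrixP=> u j.
have ri : forall z : int, ratr (z%:~R : rat) = z%:~R :> R by move=> z; apply: ratr_int.
transitivity (ratr (toQ x u j) : R); first by rewrite !mxE ri.
rewrite h !summxE rmorph_sum; apply: eq_bigr => i _.
rewrite !mxE rmorphM; congr (_ * _); exact: ri.
Qed.


Definition validF (F : 'rV[int]_d) := exists sigma : 'rV[R]_d -> Prop,
  is_facet A sigma /\ is_Fsigma A sigma F.

Lemma validF_pos F : validF F -> forall i : 'I_n, 0 <= dotZ F (a i).
Proof.
move=> [s [_ [Fpos _]]] i.
by have := dot_a Fpos i; rewrite dotR_toR ler0z.
Qed.

Lemma uniqF (F F' : 'rV[int]_d) : generates A -> validF F -> validF F' ->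
  (forall i : 'I_n, dotZ F (a i) = 0 -> dotZ F' (a i) = 0) -> F' = F.
Proof.
move=> gen vF vF' h0.
have Fp := validF_pos vF; have Fp' := validF_pos vF'.
case: vF => s [[[l [lpos lface]] [[v [vs vfree]] _]] [Fpos [Fs hsur]]].
case: vF' => s' [_ [_ [_ hsur']]].
have [y1 hy] := hsur 1; have [y1' hy'] := hsur' 1.
set V := \matrix_(k < d.-1) v k.
set u := toR R F; set u' := toR R F'.
have orth : forall k, dotR u (v k) = 0 /\ dotR u' (v k) = 0.
  move=> k; have Fv := Fs _ (vs k).
  have [[c [c0 ev]] _] := (lface (v k)).1 (vs k).
  split => //.
  move: Fv; rewrite ev !dot_cone => Fv.
  have hz := psumr_eq0P (P:=predT) (fun i _ => mulr_ge0 (c0 i) (dot_a Fpos i)) Fv.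
  apply: big1 => i _; have := hz i isT; rewrite /u' !dotR_toR.
  move/eqP; rewrite mulf_eq0 => /orP[/eqP->|]; first by rewrite mul0r.
  by rewrite intr_eq0 => /eqP/h0 ->; rewrite mulr0.
have Vt : forall w : 'rV[R]_d, (forall k, dotR w (v k) = 0) -> (w <= kermx V^T)%MS.
  move=> w hw; apply/sub_kermxP; apply/rowP => k; rewrite !mxE -[RHS](hw k) /dotR.
  by apply: eq_bigr => j _; rewrite !mxE.
have hu := Vt u (fun k => (orth k).1).
have hu' := Vt u' (fun k => (orth k).2).
have u0 : u != 0.
  apply/eqP => u0; have : dotR u (toR R y1) = 1 by rewrite dotR_toR hy.
  rewrite u0 dotRE /dotg big1 => [|i _]; last by rewrite mxE mul0r.
  by move/eqP; rewrite eq_sym oner_eq0.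
have rK : \rank (kermx V^T) = (d - d.-1)%N by rewrite mxrank_ker mxrank_tr (eqP vfree).
have hKu : (kermx V^T <= u)%MS.
  have le := mxrank_leqif_eq hu; rewrite rank_rV u0 rK /= in le.
  have : (u == kermx V^T)%MS.
    rewrite -(le.2); have := le.1; apply: contraTT => h; lia.
  by move/andP=> [_ ->].
have /sub_rVP [lam hl] := submx_trans hu' hKu.
have dl : forall z, (dotZ F' z)%:~R = lam * (dotZ F z)%:~R :> R.
  by move=> z; rewrite -!dotR_toR -/u -/u' hl dotRE dotgl_scale.
have hk := dl y1; rewrite hy mulr1 in hk.
set k := dotZ F' y1 in hk.
have e1 : k * dotZ F y1' = 1.
  by apply: (intr_inj (R:=R)); rewrite intrM hk -dl hy'.
have [c hc] := gen_dot F y1 gen; rewrite hy in hc.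
have [i Hi] : exists i : 'I_n, dotZ F (a i) != 0.
  case: (pselect (exists i : 'I_n, dotZ F (a i) != 0)) => // N.
  move: hc; rewrite big1 => [//|i _].
  case: (eqVneq (dotZ F (a i)) 0) => [->|Hi]; first by rewrite mulr0.
  by case: N; exists i.
have Fi : 0 < dotZ F (a i) by rewrite lt_def Hi Fp.
have Fa : dotZ F' (a i) = k * dotZ F (a i).
  by apply: (intr_inj (R:=R)); rewrite intrM hk dl.
have k0 : 0 <= k by rewrite -(pmulr_lge0 _ Fi) -Fa Fp'.
have k1 : k = 1.
  have := congr1 absz e1; rewrite abszM => /eqP; rewrite muln_eq1 => /andP[/eqP hk1 _].
  by rewrite -(gez0_abs k0) hk1.
rewrite k1 in hk.
have uu : u' = u by rewrite hl -hk scale1r.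
apply/matrixP => p j; have := congr1 (fun M : 'rV[R]_d => M p j) uu; rewrite /u /u' !mxE.
by move/intr_inj.
Qed.


Lemma inNA0 : inNA A 0.
Proof. by exists (fun _ => 0%N); rewrite big1 // => i _; rewrite mulr0n. Qed.

Definition SF (F : 'rV[int]_d) (m : int) := exists b, inNA A b /\ m = dotZ F b.

Lemma SF0 F : SF F 0.
Proof.
exists 0; split; last by rewrite dotZE dotg0.
by exists (fun _ => 0%N); rewrite big1 // => i _; rewrite mulr0n.
Qed.

Lemma SFD F m1 m2 : SF F m1 -> SF F m2 -> SF F (m1 + m2).
Proof.
move=> [b1 [[n1 e1] ->]] [b2 [[n2 e2] ->]].
exists (b1 + b2); split; last by rewrite !dotZE dotgD.
exists (fun i => n1 i + n2 i)%N; rewrite e1 e2 -big_split /=.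
by apply: eq_bigr => i _; rewrite mulrnDr.
Qed.

Lemma SFa F (i : 'I_n) : SF F (dotZ F (a i)).
Proof.
exists (a i); split => //; exists (fun j => (j == i) : nat).
rewrite (bigD1 i) //= eqxx mulr1n big1 ?addr0 // => j /negbTE ->.
by rewrite mulr0n.
Qed.

Lemma SFMn F m k : SF F m -> SF F (m *+ k).
Proof.
move=> h; elim: k => [|k IH]; first by rewrite mulr0n; apply: SF0.
by rewrite mulrS; apply: SFD.
Qed.

Lemma SFsum F (g : 'I_n -> int) : (forall i, SF F (g i)) -> SF F (\sum_i g i).
Proof.
move=> h; apply: (big_ind (SF F)) => //; [exact: SF0 | exact: SFD].
Qed.

Definition tb (tau : 'rV[R]_d -> Prop) (i : 'I_n) := `[< tau (toR R (a i)) >].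
Definition wv tau := \sum_(i < n | tb tau i) a i.
Definition goodN F x w N := forall N', (N <= N')%N ->
  exists b, inNA A b /\ dotZ F (x + w *+ N') = dotZ F b.

Lemma goodF (tau : 'rV[R]_d -> Prop) (x : 'rV[int]_d) (q : 'I_n -> rat) :
  (forall i : 'I_n, ~ tau (toR R (a i)) -> q i = 0) ->
  toQ x = \sum_(i < n) q i *: toQ (a i) ->
  generates A -> forall F, validF F -> exists N, goodN F x (wv tau) N.
Proof.
move=> hq0 hxq gen F vF.
have Fp := validF_pos vF.
have hxR := Q_to_R hxq.
have Fx : (dotZ F x)%:~R = \sum_i ratr (q i) * (dotZ F (a i))%:~R :> R.
  rewrite -dotR_toR hxR dot_cone; apply: eq_bigr => i _; by rewrite dotR_toR.
have Fw : dotZ F (wv tau) = \sum_(i < n | tb tau i) dotZ F (a i).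
  by rewrite dotZE /wv dotg_sum.
have Fw0 : 0 <= dotZ F (wv tau) by rewrite Fw sumr_ge0.
case: (eqVneq (dotZ F (wv tau)) 0) => [Fw00|Fwn0].
  have hz := psumr_eq0P (fun i _ => Fp i) (etrans (esym Fw) Fw00).
  have Fx0 : dotZ F x = 0.
    apply: (intr_inj (R:=R)); rewrite Fx big1 // => i _.
    case hti: (tb tau i); first by rewrite hz // mulr0.
    have : ~ tau (toR R (a i)) by apply/asboolPn; rewrite /tb in hti; rewrite hti.
    by move/hq0 ->; rewrite rmorph0 mul0r.
  exists 0%N => N' _; exists 0; split; first by apply: inNA0.
  by rewrite !dotZE dotgD dotgMn dotg0 -!dotZE Fx0 Fw00 mul0rn addr0.
have Fw1 : 0 < dotZ F (wv tau) by rewrite lt_def Fwn0 Fw0.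
case: vF => s [_ [_ [_ hsur]]]; have [y1 hy] := hsur 1.
have [c hc] := gen_dot F y1 gen; rewrite hy in hc.
pose Pk i := match c i with Posz m => m | Negz _ => 0%N end.
pose Nk i := match c i with Posz _ => 0%N | Negz m => m.+1 end.
have hcPN : forall i, c i = (Pk i)%:Z - (Nk i)%:Z.
  by move=> i; rewrite /Pk /Nk; case: (c i) => m; rewrite ?subr0 // NegzE sub0r.
pose p := \sum_(i < n) dotZ F (a i) *+ Pk i.
pose q' := \sum_(i < n) dotZ F (a i) *+ Nk i.
have Sp : SF F p by apply: SFsum => i; apply: SFMn; apply: SFa.
have Sq : SF F q' by apply: SFsum => i; apply: SFMn; apply: SFa.
have epq : p = q' + 1.
  rewrite hc /p /q' -big_split; apply: eq_bigr => i _ /=.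
  rewrite hcPN !intMn; ring.
have q0 : 0 <= q' by apply: sumr_ge0 => i _; apply: mulrn_wge0.
have fr := frob (SF0 F) (@SFD F) Sp Sq epq q0.
exists `|(q' * q' - dotZ F x)%R|%N => N' hN'.
have hm : q' * q' <= dotZ F (x + wv tau *+ N').
  rewrite dotZE dotgD dotgMn -!dotZE.
  have h1 : (N'%:Z) <= dotZ F (wv tau) *+ N'.
    by rewrite intMn ler_peMl.
  have h2 : q' * q' - dotZ F x <= Posz `|(q' * q' - dotZ F x)%R|%N by rewrite abszE ler_norm.
  have h3 : Posz `|(q' * q' - dotZ F x)%R|%N <= N'%:Z by rewrite lez_nat.
  move: h1 h2 h3; set Q := q' * q'; set X := dotZ F x; set W := dotZ F (wv tau) *+ N'.
  lia.
have [b [hb e]] := fr _ hm.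
by exists b.
Qed.


Lemma uniformN (tau : 'rV[R]_d -> Prop) (x : 'rV[int]_d) (q : 'I_n -> rat) :
  (forall i : 'I_n, ~ tau (toR R (a i)) -> q i = 0) ->
  toQ x = \sum_(i < n) q i *: toQ (a i) ->
  generates A -> exists N, forall F, validF F -> goodN F x (wv tau) N.
Proof.
move=> hq0 hxq gen.
pose zs F := [set i : 'I_n | dotZ F (a i) == 0].
have hS : forall S : {set 'I_n}, exists N : nat,
    forall F, validF F -> zs F = S -> goodN F x (wv tau) N.
  move=> S; case: (pselect (exists F, validF F /\ zs F = S)) => [[F0 [v0 e0]]|no].
    have [N hN] := goodF hq0 hxq gen v0; exists N => F vF eF.
    suff -> : F = F0 by [].
    apply: (uniqF gen v0 vF) => i /eqP h; apply/eqP.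
    have : i \in zs F0 by rewrite inE h.
    by rewrite e0 -eF inE.
  by exists 0%N => F vF eF; case: no; exists F.
have [Nf hNf] := fin_all_exists hS.
exists (\max_S Nf S) => F vF N' hN'; apply: (hNf (zs F) F vF erefl N').
by apply: leq_trans hN'; apply: leq_bigmax.
Qed.

End Main.

Theorem lemma8p11 (R : realType) (d : nat) (A : seq 'rV[int]_d) :
  generates A -> scored R A ->
  forall tau : 'rV[R]_d -> Prop, is_face A tau ->
  forall x : 'rV[int]_d, inQspan A tau x <-> inZspan A tau x.
Proof.
move=> gen sc tau [l [lpos lface]] x; split.
- move=> [q [hq0 hxq]].
  have [N0 hN] := uniformN hq0 hxq gen.
  set w := wv A tau; set z := x + w *+ N0.
  have hz : inNA A z.
    apply: sc => s F facet Fs.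
    have vF : validF R A F by exists s.
    have [b [hb e]] := hN F vF N0 (leqnn _).
    by exists b.
  case: hz => nz ez.
  have ltau : forall i : 'I_(size A), tb tau i -> dotR l (toR R A`_i) = 0.
    by move=> i /asboolP /lface [].
  have lx : dotR l (toR R x) = 0.
    rewrite (Q_to_R R hxq) dot_cone big1 // => i _.
    case hti: (tb tau i); first by rewrite ltau // mulr0.
    have nt : ~ tau (toR R A`_i) by apply/asboolPn; rewrite /tb in hti; rewrite hti.
    by rewrite (hq0 _ nt) rmorph0 mul0r.
  have lw : dotR l (toR R w) = 0.
    by rewrite /w /wv toR_sum dotRE dotg_sum big1 // => i /ltau.
  have lz : dotR l (toR R z) = 0.
    by rewrite /z toRD toRMn dotRE dotgD dotgMn -!dotRE lx lw mul0rn addr0.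
  have lz' := lz; rewrite ez toR_sum dotRE dotg_sum in lz'.
  have hpos : forall i : 'I_(size A), 0 <= dotg l (toR R (A`_i *+ nz i)).
    by move=> i; rewrite toRMn dotgMn mulrn_wge0 //; apply: dot_a.
  have hzero := psumr_eq0P (fun i _ => hpos i) lz'.
  have tau_n : forall i, (0 < nz i)%N -> tau (toR R A`_i).
    move=> i hi; apply/(lface _).2; split; first exact: (@cone_a R d A i).
    have := hzero i isT; rewrite toRMn dotgMn => /eqP; rewrite mulrn_eq0.
    by case/orP => [/eqP h|/eqP //]; rewrite h in hi.
  exists (fun i => (nz i)%:Z - (if tb tau i then N0 else 0%N)%:Z); split.
    move=> i nt.
    have tbf : tb tau i = false by apply/negbTE/asboolPn.
    have nz0 : nz i = 0%N by case: (posnP (nz i)) => // /tau_n.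
    by rewrite tbf nz0.
  have ex : x = z - w *+ N0 by rewrite /z addrK.
  rewrite ex ez /w /wv -sumrMnl (big_mkcond (tb tau)) /= -sumrB; apply: eq_bigr => i _.
  rewrite scalerBl -[Posz (nz i)]natz scaler_nat.
  by case: (tb tau i); rewrite ?mul0rn -?natz ?scaler_nat // scale0r.
- move=> [c [hc0 ->]]; exists (fun i => (c i)%:~R); split.
    by move=> i /hc0 ->.
  apply/matrixP=> u j; rewrite !mxE !summxE rmorph_sum; apply: eq_bigr => i _.
  by rewrite !mxE rmorphM.
Qed.
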